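(* Let $d\ge2$, $n\ge2$ and let $v=v_1\cdots v_n\in\mathcal{L}(n,d)$. Consider the unfoldings of all billiard trajectories in $[0,1]^d$ which are coded by $v$ and start inside the cube $[0,1]^d$. Then for every $i$ with $2\le i\le n$, there is only one face of the tessellation that corresponds to the letter $v_i$, i.e. all these unfolded trajectories cross the same $(d-1)$-dimensional face of the tessellation at their $i$-th letter.
   Context: Billiard in the hypercube $[0,1]^d$, coded by $d$ letters: the two parallel $(d-1)$-faces orthogonal to the $i$-th coordinate axis get letter $i$; $\mathcal{L}(n,d)$ is the set of codes of length $n$ of billiard orbit segments. Unfolding: instead of reflecting a trajectory one reflects the cube, so the trajectory becomes a straight line in $\mathbb{R}^d$ tiled by the unit cubes $k+[0,1]^d$, $k\in\mathbb{Z}^d$, and each crossing of a $(d-1)$-face of this tessellation orthogonal to the $i$-th axis contributes the letter $i$. *)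

(* Defs.v *)
From mathcomp Require Import all_boot all_order all_algebra.
From mathcomp Require Import reals.
Set Implicit Arguments. Unset Strict Implicit. Unset Printing Implicit Defensive.
Import Order.TTheory GRing.Theory Num.Theory.
Local Open Scope ring_scope.

Section Billiard.
Variables (R : realType) (d n : nat).

(* Letters are 0-based: 'I_d = {0,...,d-1} stands for {1,...,d}.
   Positions in a word of length n are 'I_n (0-based).  *)

(* Unfolded trajectory: the straight line t |-> p + t * th in R^d. *)
Definition upt (p th : 'I_d -> R) (t : R) : 'I_d -> R :=
  fun j => p j + t * th j.

(* At time t the unfolded line lies on a hyperplane x_j \in Z of the
   tessellation by unit cubes k + [0,1]^d. *)
Definition on_wall (p th : 'I_d -> R) (t : R) (j : 'I_d) : Prop :=
  upt p th t j \is a Num.int.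

(* The orbit segment starting at time 0 from p, with direction th, has as
   code v (a word of length n): ts i are the times (> 0, increasing) of
   its first n crossings of walls of the tessellation; at time ts i the
   line crosses only a wall orthogonal to axis v i (non-singular crossing),
   and there is no other crossing before ts (last). *)
Definition coded_by (p th : 'I_d -> R) (v : 'I_n -> 'I_d) (ts : 'I_n -> R)
  : Prop :=
  [/\ (forall i, 0 < ts i),
      (forall i j : 'I_n, (i < j)%N -> ts i < ts j),
      (forall i l, on_wall p th (ts i) l <-> l = v i) &
      (forall t, 0 < t -> (exists l, on_wall p th t l) ->
         (exists i, t = ts i) \/ (forall i, ts i < t))].

Definition in_L (v : 'I_n -> 'I_d) : Prop :=
  exists (p th : 'I_d -> R) (ts : 'I_n -> R),
    (forall j, 0 <= p j <= 1) /\ coded_by p th v ts.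

Definition tess_face (j : 'I_d) (k : int) (m : 'I_d -> int) (x : 'I_d -> R)
  : Prop :=
  x j = k%:~R /\ (forall l, l != j -> (m l)%:~R <= x l <= (m l + 1)%:~R).

End Billiard.

(* Main.v *)
Require Import Defs.
From mathcomp Require Import all_boot all_order all_algebra.
From mathcomp Require Import reals zify lra.
Import Order.TTheory GRing.Theory Num.Theory.
Local Open Scope ring_scope.

Lemma core (R : realType) (x0 x1 : R) (C : nat) (e : bool) :
 x0 <= x1 -> (x1 \is a Num.int <-> e) -> (e -> x0 < x1) ->
 (forall k : int, x0 < k%:~R < x1 -> False) ->
 C%:R <= x0 < C%:R + 1 -> (C + e)%:R <= x1 < (C + e)%:R + 1.
Proof.
move=> hle; case: e => /= [[_ H1] hlt | [H1 _] _] hno /andP[h0 h1].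
- have/intrP[z ez] := H1 erefl; subst x1. have hz := hlt erefl.
  have hCz : (C%:Z < z)%R.
    by rewrite -(ltr_int R); apply: le_lt_trans hz; rewrite (_ : (C%:Z)%:~R = C%:R).
  have hz2 : (z <= C%:Z + 1)%R.
    rewrite leNgt; apply/negP => hh; apply: (hno (C%:Z + 1)%R).
    rewrite intrD h1 /= -intrD ltr_int; exact: hh.
  have -> : z = (C + 1)%N%:Z by lia.
  rewrite (_ : ((C+1)%N%:Z)%:~R = (C+1)%:R :> R) // lexx /=. lra.
- rewrite addn0; apply/andP; split; first exact: le_trans hle.
  rewrite ltNge; apply/negP => hh.
  have hne : x1 != C%:R + 1.
    apply/negP => /eqP e1; have : false by apply: H1; rewrite e1 natr1 natr_int.
    by [].
  apply: (hno (C%:Z + 1)%R); rewrite intrD /= h1 /=.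
  rewrite lt_neqAle eq_sym hne; exact: hh.
Qed.

Lemma ivt (R : realType) (p th a b k : R) : 0 <= th -> a < b ->
  p + a * th < k < p + b * th -> exists t, a < t < b /\ p + t * th = k.
Proof.
move=> h0 hab /andP[h1 h2].
have thp : 0 < th by nra.
exists ((k - p) / th); split; last first.
  by rewrite mulfVK ?gt_eqF // addrC subrK.
have ht : (k - p) / th * th = k - p by rewrite mulfVK ?gt_eqF.
apply/andP; split.
- rewrite ltNge; apply/negP => hh. have : (k - p) / th * th <= a * th.
    by rewrite ler_wpM2r // ltW.
  lra.
- rewrite ltNge; apply/negP => hh. have : b * th <= (k - p) / th * th.
    by rewrite ler_wpM2r // ltW.
  lra.
Qed.

Lemma nonint01 (R : realType) (x : R) : 0 < x < 1 -> ~ (x \is a Num.int).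
Proof.
move=> /andP[h0 h1] /intrP[z ez]; subst x.
have : (0 < z)%R by rewrite -(ltr_int R).
have : (z < 1)%R by rewrite -(ltr_int R).
lia.
Qed.

Lemma sum_le_split n (F : 'I_n -> nat) (j : 'I_n) :
  (\sum_(j' < n | (j' <= j)%N) F j' = F j + \sum_(j' < n | (j' < j)%N) F j')%N.
Proof.
rewrite (bigD1 j) //=; congr (_ + _)%N; apply: eq_bigl => j'.
by rewrite ltn_neqAle andbC -val_eqE.
Qed.

Section Main.
Variables (R : realType) (d n : nat) (v : 'I_n -> 'I_d).
Variables (p th : 'I_d -> R) (ts : 'I_n -> R).
Hypothesis hp : forall j, 0 < p j < 1.
Hypothesis hth : forall j, 0 <= th j.
Hypothesis hc : coded_by p th v ts.

Definition cnt (i : nat) (l : 'I_d) : nat :=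
  (\sum_(j < n | (j <= i)%N) (v j == l))%N.

Lemma ts_mono (a b : 'I_n) : ts a < ts b -> (a < b)%N.
Proof.
case: hc => _ hlt _ _ h.
case: (leqP b a) => // hba.
move: hba; rewrite leq_eqVlt => /orP[/eqP e|hba].
- have eab : a = b by apply: val_inj.
  by move: h; rewrite eab ltxx.
- by have := hlt _ _ hba; rewrite ltNge (ltW h).
Qed.

Lemma step (a : R) (j1 : 'I_n) (l : 'I_d) (C : nat) :
  0 <= a -> a < ts j1 ->
  (forall t, a < t < ts j1 -> (exists l, on_wall p th t l) -> False) ->
  C%:R <= p l + a * th l < C%:R + 1 ->
  (C + (v j1 == l))%:R <= upt p th (ts j1) l < (C + (v j1 == l))%:R + 1.
Proof.
move=> ha hab hno hb.
have [_ _ hw _] := hc.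
have hthl := hth l. have hpl := hp l.
apply: (@core R (p l + a * th l)) => //.
- rewrite /upt lerD2l; apply: ler_wpM2r => //; exact: ltW.
- split.
  + by move=> /hw ->.
  + by move=> /eqP e; apply/hw.
- move=> e; rewrite /upt ltNge; apply/negP => hh.
  have th0 : th l = 0 by apply/eqP; rewrite eq_le hthl andbT; nra.
  have : upt p th (ts j1) l \is a Num.int by apply/hw; rewrite (eqP e).
  rewrite /upt th0 mulr0 addr0; exact: nonint01.
- move=> k hk.
  have [t [ht htk]] := @ivt R (p l) (th l) a (ts j1) k%:~R hthl hab hk.
  apply: (hno t ht); exists l; rewrite /on_wall /upt htk; exact: intr_int.
Qed.

Lemma inv (k : nat) (hk : (k < n)%N) (l : 'I_d) :
  (cnt k l)%:R <= upt p th (ts (Ordinal hk)) l < (cnt k l)%:R + 1.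
Proof.
have [hpos hlt _ hcross] := hc.
elim: k hk => [|k IH] hk.
- have -> : cnt 0 l = (0 + (v (Ordinal hk) == l))%N.
    rewrite /cnt (@sum_le_split n _ (Ordinal hk)) /= big_pred0 ?addn0 //.
  apply: (step 0) => //.
  + move=> t /andP[t0 t1] hw; case: (hcross t t0 hw) => [[j ej]|hall].
    * by subst t; have := @ts_mono _ _ t1.
    * by have := hall (Ordinal hk); rewrite ltNge (ltW t1).
  + have := hp l; move=> /andP[a b]; rewrite mul0r addr0 add0r ltW //= b.
- have hk' : (k < n)%N by apply: ltnW.
  have := IH hk' => ih.
  have -> : cnt k.+1 l = (cnt k l + (v (Ordinal hk) == l))%N.
    rewrite /cnt (@sum_le_split n _ (Ordinal hk)) /= addnC; congr (_ + _)%N.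
  have h01 : ts (Ordinal hk') < ts (Ordinal hk) by apply: hlt => /=.
  apply: (step (ts (Ordinal hk'))) => //.
  + exact: ltW (hpos _).
  + move=> t /andP[t0 t1] hw.
    have tpos : 0 < t by apply: lt_trans t0; exact: hpos.
    case: (hcross t tpos hw) => [[j ej]|hall].
    * subst t; have := @ts_mono _ _ t1; have := @ts_mono _ _ t0 => /= a b; lia.
    * by have := hall (Ordinal hk); rewrite ltNge (ltW t1).
Qed.

End Main.

Theorem mainTheorem10 (R : realType) (d n : nat) (hd : (2 <= d)%N)
  (hn : (2 <= n)%N) (v : 'I_n -> 'I_d) (hv : in_L R v)
  (i : 'I_n) (hi : (1 <= i)%N) :
  exists (k : int) (m : 'I_d -> int),
    forall (p th : 'I_d -> R) (ts : 'I_n -> R),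
      (forall j, 0 < p j < 1) ->
      (forall j, 0 <= th j) ->
      coded_by p th v ts ->
      tess_face (v i) k m (upt p th (ts i)).
Proof.
exists (@cnt d n v i (v i))%:Z, (fun l => (@cnt d n v i l)%:Z).
move=> p th ts hp hth hc.
have H l := @inv R d n v p th ts hp hth hc _ (ltn_ord i) l.
have ei : Ordinal (ltn_ord i) = i by apply: val_inj.
rewrite ei in H.
have [_ _ hw _] := hc.
split.
- have/intrP[z ez] : upt p th (ts i) (v i) \is a Num.int by apply/hw.
  have /andP[a b] := H (v i); rewrite ez in a b *.
  have h1 : ((@cnt d n v i (v i))%:Z <= z)%R by rewrite -(ler_int R).
  have h2 : (z < (@cnt d n v i (v i))%:Z + 1)%R by rewrite -(ltr_int R) intrD.
  have -> : z = (@cnt d n v i (v i))%:Z by lia.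
  by [].
- move=> l _; have /andP[a b] := H l; rewrite a /= intrD ltW //.
Qed.
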